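(* Let $p$ be a prime and $j,a,b\in\mathbb{N}$. Then \[c_j(p^{a+b})=\sum_{k=0}^{j-1}(-1)^{k-j+1}\binom{j}{k+1} d_{k+1}(p^b)\,\frac{(b+k+1)^{\overline a}}{(b+1)^{\overline a}}.\]
   Context: For $j,n\in\mathbb{N}$, $d_j(n)$ is the number of ordered $j$-tuples of positive integers with product $n$, and $c_j(n)$ is the number of ordered $j$-tuples of integers each $\ge 2$ with product $n$. The rising factorial is $x^{\overline a}=\prod_{i=0}^{a-1}(x+i)$. *)

(* Defs.v *)
From mathcomp Require Import all_boot all_order all_algebra.
Set Implicit Arguments. Unset Strict Implicit. Unset Printing Implicit Defensive.

(* d_j(n): number of ordered j-tuples of positive integers with product n.
   Any such entry divides n, hence is <= n, so entries are taken in 'I_n.+1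
   without loss (for n = 0 there are none, consistently). *)
Definition dcount (j n : nat) : nat :=
  #|[pred t : j.-tuple 'I_n.+1 |
      all (fun x : 'I_n.+1 => 0 < (x : nat)) t && (\prod_(x <- t) (x : nat) == n)]|.

Definition ccount (j n : nat) : nat :=
  #|[pred t : j.-tuple 'I_n.+1 |
      all (fun x : 'I_n.+1 => 1 < (x : nat)) t && (\prod_(x <- t) (x : nat) == n)]|.

Definition rising (x a : nat) : nat := \prod_(i < a) (x + i).

(* Main.v *)
Require Import Defs.
From mathcomp Require Import all_boot all_order all_algebra ring.
Import GRing.Theory Num.Theory.


Definition cnt (P : pred nat) (M j N : nat) : nat :=
  #|[pred t : j.-tuple 'I_M.+1 |
      all (fun x : 'I_M.+1 => P x) t && (\prod_(x <- t) (x : nat) == N)]|.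

Lemma cnt0 P M N : cnt P M 0 N = (N == 1).
Proof.
rewrite /cnt; case: eqP => [->|hN].
  rewrite -[RHS](card_tuple 0 'I_M.+1) /=; apply: eq_card => t.
  by rewrite (tuple0 t) inE /= big_nil.
apply: eq_card0 => t; rewrite (tuple0 t) inE /= big_nil; apply/eqP => h; exact: hN.
Qed.

Lemma cntS P M j N : 0 < N ->
  cnt P M j.+1 N = \sum_(x < M.+1 | P x && (x %| N)) cnt P M j (N %/ x).
Proof.
move=> N0.
pose g (u : 'I_M.+1 * j.-tuple 'I_M.+1) : j.+1.-tuple 'I_M.+1 := [tuple of u.1 :: u.2].
have ginj : injective g.
  by move=> [x t] [y s] /(congr1 val) /= [-> /val_inj ->].
pose B := [set u : 'I_M.+1 * j.-tuple 'I_M.+1 | P u.1 && (u.1 %| N) &&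
   (all (fun x : 'I_M.+1 => P x) u.2 && (\prod_(x <- u.2) (x : nat) == N %/ u.1))].
have -> : cnt P M j.+1 N = #|g @: B|.
  rewrite /cnt; apply: eq_card => t; rewrite inE /=.
  apply/idP/imsetP.
    case/tupleP: t => x s /=; rewrite big_cons => /andP[/andP[Px Pt] /eqP Hp].
    exists (x, s) => //.
    rewrite inE /= Px Pt /=.
    have d : x %| N by rewrite -Hp dvdn_mulr.
    rewrite d /= -Hp mulKn //; move: N0; rewrite -Hp muln_gt0 => /andP[] //.
  move=> [[x s]]; rewrite inE /= => /andP[/andP[Px d] /andP[Ps /eqP Hs]] ->.
  rewrite /g /= big_cons Px Ps Hs mulnC divnK //=.
rewrite card_imset // -sum1_card big_mkcond /=.
transitivity (\sum_(u : 'I_M.+1 * j.-tuple 'I_M.+1) (if (u.1, u.2) \in B then 1 else 0)).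
  by apply: eq_bigr => -[].
rewrite -(pair_bigA _ (fun x t => if (x, t) \in B then 1 else 0)) /=.
rewrite [RHS]big_mkcond /=; apply: eq_bigr => x _.
case: ifP => H.
  rewrite /cnt -sum1_card [RHS]big_mkcond /=; apply: eq_bigr => t _.
  by rewrite inE /= H.
by apply: big1 => t _; rewrite inE /= H.
Qed.

Fixpoint G (Pf : pred nat) j e : nat :=
  match j with 0 => (e == 0 : nat) | j'.+1 => \sum_(f < e.+1 | Pf f) G Pf j' (e - f) end.

Lemma sum_div_pow (F : nat -> nat) p e M : prime p -> p ^ e <= M ->
  \sum_(x < M.+1 | x %| p ^ e) F x = \sum_(f < e.+1) F (p ^ f).
Proof.
move=> pp le.
have p1 := prime_gt1 pp.
transitivity (\sum_(f < e.+1) \sum_(x < M.+1) (if x == p ^ f :> nat then F x else 0)).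
  rewrite exchange_big big_mkcond /=; apply: eq_bigr => x _.
  case: (boolP (x %| p ^ e)) => [/(dvdn_pfactor _ _ pp) [g ge ->] | nd].
    rewrite (eq_bigr (fun f : 'I_e.+1 => if (f == g :> nat) then F (p ^ g) else 0)); last first.
      by move=> f _; rewrite eqn_exp2l // eq_sym; case: eqP => // ->.
    by rewrite -big_mkcond (big_ord1_eq _ (fun=> F (p ^ g))) ltnS ge.
  symmetry; apply: big1 => f _; case: eqP => // ex; case/negP: nd; rewrite ex dvdn_exp2l //.
  by rewrite -ltnS.
apply: eq_bigr => f _; rewrite -big_mkcond big_ord1_eq ltnS.
rewrite (leq_trans _ le) // leq_pexp2l ?prime_gt0 // -ltnS //.
Qed.

Lemma cnt_pow P p M j e : prime p -> p ^ e <= M ->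
  cnt P M j (p ^ e) = G (fun f => P (p ^ f)) j e.
Proof.
move=> pp; have p1 := prime_gt1 pp; have p0 := prime_gt0 pp.
elim: j e => [|j IH] e le.
  by rewrite cnt0 /= -{1}(expn0 p) eqn_exp2l.
rewrite cntS ?expn_gt0 ?p0 //= big_mkcond /=.
rewrite (eq_bigr (fun x : 'I_M.+1 => if x %| p ^ e then
          (if P x then cnt P M j (p ^ e %/ x) else 0) else 0)); last first.
  by move=> x _; case: (P x); case: (x %| _).
rewrite -big_mkcond /= (sum_div_pow (fun x => if P x then cnt P M j (p ^ e %/ x) else 0)) //.
rewrite [RHS]big_mkcond /=; apply: eq_bigr => f _.
case: (P _) => //; rewrite -expnB // ?IH //; last by rewrite -ltnS.
by rewrite (leq_trans _ le) // leq_pexp2l // leq_subr.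
Qed.

Lemma G_ext Pf Qf j e : Pf =1 Qf -> G Pf j e = G Qf j e.
Proof.
move=> H; elim: j e => [|j IH] e //=.
by apply: eq_big => [f|f _]; rewrite ?H ?IH.
Qed.

Definition Gd := G (fun _ => true).
Definition Gc := G (fun f => 0 < f).

Lemma GdS j n : Gd j.+1 n.+1 = Gd j.+1 n + Gd j n.+1.
Proof.
rewrite /Gd /= big_ord_recl subn0 addnC; congr (_ + _).
Qed.

Lemma Gd_0 k : Gd k 0 = 1%N.
Proof. elim: k => [|k IH] //. rewrite /Gd /= big_ord_recl big_ord0 addn0. exact: IH. Qed.

Lemma Gd_closed k n : Gd k.+1 n = 'C(n + k, k).
Proof.
elim: k n => [|k IHk] n.
  elim: n => [|n IHn]; first by rewrite Gd_0.
  by rewrite GdS IHn !bin0.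
elim: n => [|n IHn]; first by rewrite Gd_0 add0n binn.
rewrite GdS IHn IHk !addSn binS [n + k.+1]addnS.
by [].
Qed.

Lemma Gc_rec j n : Gc j.+1 n = \sum_(f < n) Gc j (n - f.+1).
Proof. by rewrite /Gc /= big_mkcond big_ord_recl /= add0n. Qed.

Lemma Gd_diff m n : \sum_(f < n) Gd m (n - f.+1) + Gd m n = Gd m.+1 n.
Proof. by rewrite /Gd [RHS]/= big_ord_recl subn0 addnC. Qed.

Section RingPart.
Local Open Scope ring_scope.

Definition X (j n : nat) : rat :=
  \sum_(m < j.+1) (-1) ^+ (j + m) * ('C(j, m))%:R * (Gd m n)%:R.

Lemma Gc_X j n : (Gc j n)%:R = X j n.
Proof.
elim: j n => [|j IH] n.
  by rewrite /X big_ord1 addn0 expr0 bin0 !mul1r.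
rewrite Gc_rec natr_sum.
under eq_bigr do rewrite IH.
rewrite /X exchange_big /=.
under eq_bigr do rewrite -mulr_sumr -natr_sum.
have E : forall m, (\sum_(f < n) Gd m (n - f.+1))%:R = (Gd m.+1 n)%:R - (Gd m n)%:R :> rat.
  by move=> m; rewrite -Gd_diff natrD addrK.
under eq_bigr do rewrite E mulrBr.
rewrite sumrB.
pose B : rat := \sum_(i < j.+1) (-1) ^+ (j + i) * 'C(j, i)%:R * (Gd i.+1 n)%:R.
set g0 : rat := (Gd 0 n)%:R.
pose A : rat := \sum_(m < j) (-1) ^+ (j + m) * ('C(j, m.+1))%:R * (Gd m.+1 n)%:R.
have H1 : \sum_(i < j.+1) (-1) ^+ (j + i) * ('C(j, i))%:R * (Gd i n)%:R =
   (-1) ^+ j * g0 - A.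
  rewrite big_ord_recl /= addn0 bin0 mulr1; congr (_ + _).
  rewrite /A -sumrN; apply: eq_bigr => i _.
  by rewrite /bump /= !add1n addnS exprS mulN1r !mulNr.
have H2 : \sum_(i < j.+2) (-1) ^+ (j.+1 + i) * ('C(j.+1, i))%:R * (Gd i n)%:R =
   - (-1) ^+ j * g0 + A + B.
  rewrite big_ord_recl /= addn0 bin0 mulr1 exprS mulN1r -addrA; congr (_ + _).
  rewrite /bump /=.
  under eq_bigr do rewrite add1n binS natrD addSn addnS exprS exprS mulN1r mulN1r opprK mulrDr mulrDl.
  rewrite big_split /=; congr (_ + _).
  by rewrite big_ord_recr /= bin_small // mulr0 mul0r addr0.
rewrite H1 H2 -/B; ring.
Qed.

End RingPart.

Lemma rising_fact x a : rising (x + 1) a * x`! = (x + a)`!.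
Proof.
elim: a => [|a IH]; first by rewrite /rising big_ord0 mul1n addn0.
rewrite /rising big_ord_recr /= -/(rising (x + 1) a) mulnAC IH [x + a.+1]addnS factS.
by rewrite mulnC addnAC addn1.
Qed.

Lemma key a b k : 'C(b + k, k) * rising (b + k + 1) a = 'C(a + b + k, k) * rising (b + 1) a.
Proof.
have pos : 0 < k`! * b`! by rewrite muln_gt0 !fact_gt0.
apply/eqP; rewrite -(eqn_pmul2r pos); apply/eqP.
have e1 : 'C(b + k, k) * (k`! * b`!) = (b + k)`!.
  by rewrite -{2}(addnK k b) bin_fact // leq_addl.
have e2 : 'C(a + b + k, k) * (k`! * (a + b)`!) = (a + b + k)`!.
  by rewrite -{2}(addnK k (a + b)) bin_fact // leq_addl.
rewrite mulnAC e1 mulnC rising_fact.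
have -> : 'C(a + b + k, k) * rising (b + 1) a * (k`! * b`!) =
   'C(a + b + k, k) * (k`! * (rising (b + 1) a * b`!)) by ring.
by rewrite rising_fact [b + a]addnC e2 addnC addnA.
Qed.

Local Open Scope ring_scope.

Lemma sign_sub n k : (k <= n)%N -> (-1) ^+ (n - k) = (-1) ^+ (n + k) :> rat.
Proof. by move=> kn; rewrite -signr_odd oddB // -oddD signr_odd. Qed.

Theorem lemma10 (p j a b : nat) (hp : prime p)
    (hj : (0 < j)%N) (ha : (0 < a)%N) (hb : (0 < b)%N) :
  (ccount j (p ^ (a + b)))%:R =
  \sum_(k < j)
     (-1) ^+ (j.-1 - k) * ('C(j, k.+1))%:R * (dcount k.+1 (p ^ b))%:R
       * ((rising (b + k + 1) a)%:R / (rising (b + 1) a)%:R) :> rat.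
Proof.
have p0 := prime_gt0 hp; have p1 := prime_gt1 hp.
have hd m : dcount m (p ^ b) = Gd m b.
  change (cnt (fun x => (0 < x)%N) (p ^ b) m (p ^ b) = Gd m b).
  by rewrite cnt_pow //; apply: G_ext => f; rewrite expn_gt0 p0.
have hc : ccount j (p ^ (a + b)) = Gc j (a + b).
  change (cnt (fun x => (1 < x)%N) (p ^ (a + b)) j (p ^ (a + b)) = Gc j (a + b)).
  by rewrite cnt_pow //; apply: G_ext => f; rewrite -{1}(expn0 p) ltn_exp2l.
rewrite hc Gc_X /X.
case: j hj {hc} => // j _.
rewrite big_ord_recl /=.
have -> : Gd 0 (a + b) = 0%N by rewrite /Gd /= addn_eq0 eqn0Ngt ha.
rewrite mulr0 add0r; apply: eq_bigr => k _.
rewrite hd /bump /= add1n Gd_closed Gd_closed.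
have r0 : (rising (b + 1) a)%:R != 0 :> rat.
  rewrite pnatr_eq0 -lt0n /rising prodn_gt0 // => i; rewrite addn1 //.
have sg : (-1) ^+ (j.+1 + k.+1) = (-1) ^+ (j - k) :> rat.
  rewrite sign_sub; last by rewrite -ltnS.
  by rewrite !addSn !addnS !exprS !mulN1r opprK.
rewrite -!mulrA sg; congr (_ * (_ * _)).
rewrite mulrA -natrM key natrM mulfK //.
Qed.
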